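(* Let $X$ be a connected weighted graph. Then the subdivision $S(X)$ is nonsingular (i.e. $A(S(X))$ is invertible) if and only if $X$ is unicyclic and its unique cycle $C_p$, with the weights it inherits from $X$, has nonsingular subdivision $S(C_p)$.
   Context: Graphs are simple, undirected, with nonzero real edge weights; $A(\cdot)$ is the weighted adjacency matrix. The subdivision $S(X)$ of a weighted graph $X$ is obtained by replacing each edge $\{u,v\}$ of weight $\omega$ by a new vertex $w$ and two edges $\{u,w\},\{w,v\}$, each of weight $\omega$. *)

(* Defs.v *)
From HB Require Import structures.
From mathcomp Require Import all_boot all_order all_algebra.
Set Implicit Arguments. Unset Strict Implicit. Unset Printing Implicit Defensive.
Import Order.TTheory GRing.Theory Num.Theory.
Local Open Scope ring_scope.

(* A weighted simple graph on a finite vertex type T is given by a weight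
   function w : T -> T -> R (assumed symmetric, zero on the diagonal);
   {x,y} is an edge, of weight w x y, iff x != y and w x y != 0. *)
Section WGraph.
Variables (R : realFieldType) (T : finType) (w : T -> T -> R).

Definition adj (x y : T) : bool := (x != y) && (w x y != 0).

Definition edges : {set {set T}} :=
  [set e | [exists x, exists y, adj x y && (e == [set x; y])]].

Definition edge_t := {e : {set T} | e \in edges}.

(* Weight of the subdivision edge between vertex v and edge-vertex e:
   the weight of e if v is an endpoint of e, and 0 otherwise. *)
Definition inc (v : T) (e : edge_t) : R :=
  if v \in val e then \sum_(u in val e :\ v) w v u else 0.

Definition S_adj (a b : (T + edge_t)%type) : R :=
  match a, b with
  | inl v, inr e => inc v e
  | inr e, inl v => inc v e
  | _, _ => 0
  end.

Definition connectedw : Prop := forall x y : T, connect adj x y.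

Definition is_cycle (C : {set T}) (F : {set {set T}}) : Prop :=
  [/\ F \subset edges,
      forall e, e \in F -> e \subset C,
      (2 < #|C|)%N,
      forall v, v \in C -> #|[set e in F | v \in e]| = 2%N &
      forall x y, x \in C -> y \in C ->
        connect (fun a b => [set a; b] \in F) x y].

Definition cyc_weight (C : {set T}) (F : {set {set T}})
  (x y : {x : T | x \in C}) : R :=
  if [set val x; val y] \in F then w (val x) (val y) else 0.

End WGraph.

Definition adj_mx (R : realFieldType) (V : finType) (a : V -> V -> R)
  : 'M[R]_#|V| := \matrix_(i, j) a (enum_val i) (enum_val j).

Definition nonsingular (R : realFieldType) (V : finType) (a : V -> V -> R)
  : Prop := adj_mx a \in unitmx.

Arguments adj {R T} w x y.
Arguments edges {R T} w.
Arguments inc {R T} w v e.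
Arguments S_adj {R T} w a b.
Arguments connectedw {R T} w.
Arguments is_cycle {R T} w C F.
Arguments cyc_weight {R T} w C F x y.

(* Main.v *)
Require Import Defs.
From HB Require Import structures.
From mathcomp Require Import all_boot all_order all_algebra.
From mathcomp Require Import zify.
From Stdlib Require Import Classical.
Set Implicit Arguments. Unset Strict Implicit. Unset Printing Implicit Defensive.
Import Order.TTheory GRing.Theory Num.Theory.
Local Open Scope ring_scope.
Section LinAlg.
Variable R : realFieldType.

Definition mk (I J : finType) (f : I -> J -> R) : 'M[R]_(#|I|, #|J|) :=
  \matrix_(i, j) f (enum_val i) (enum_val j).

Definition ker_triv (I J : finType) (f : I -> J -> R) :=
  forall x : I -> R, (forall j, \sum_i x i * f i j = 0) -> forall i, x i = 0.

Lemma sum_enum (I : finType) (F : I -> R) :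
  \sum_(k < #|I|) F (enum_val k) = \sum_i F i.
Proof. by rewrite -(big_enum_val (A := predT)); apply: eq_bigl => i; rewrite inE. Qed.

Lemma row_free_mk (I J : finType) (f : I -> J -> R) :
  row_free (mk f) <-> ker_triv f.
Proof.
split.
- move=> rf x hx i.
  have: (\row_k x (enum_val k)) *m mk f = 0.
    apply/rowP => j; rewrite !mxE.
    rewrite (eq_bigr (fun k => x (enum_val k) * f (enum_val k) (enum_val j))); last first.
      by move=> k _; rewrite !mxE.
    by rewrite (sum_enum (fun i => x i * f i (enum_val j))) hx.
  move/eqP; rewrite mulmx_free_eq0 // => /eqP/rowP/(_ (enum_rank i)).
  by rewrite !mxE enum_rankK.
- move=> kt; apply: inj_row_free => v hv; apply/rowP => k; rewrite mxE.
  have H : forall j, \sum_i v 0 (enum_rank i) * f i j = 0.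
    move=> j; move/matrixP: hv => /(_ 0 (enum_rank j)); rewrite !mxE => hv.
    rewrite -[RHS]hv -(sum_enum (fun i => v 0 (enum_rank i) * f i j)) /=.
    by apply: eq_bigr => k' _; rewrite enum_valK !mxE enum_rankK.
  by have := kt _ H (enum_val k); rewrite enum_valK.
Qed.

Lemma mk_tr (I J : finType) (f : I -> J -> R) : (mk f)^T = mk (fun j i => f i j).
Proof. by apply/matrixP => i j; rewrite !mxE. Qed.

Lemma ker_triv_card (I J : finType) (f : I -> J -> R) :
  ker_triv f -> (#|I| <= #|J|)%N.
Proof.
move/row_free_mk; rewrite /row_free => /eqP <-; exact: rank_leq_col.
Qed.

Lemma ker_triv_sq (I J : finType) (f : I -> J -> R) :
  #|I| = #|J| -> ker_triv f <-> ker_triv (fun j i => f i j).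
Proof.
move=> hc; split.
- move/row_free_mk => h; apply/row_free_mk; move: h.
  by rewrite -mk_tr /row_free mxrank_tr => /eqP ->; apply/eqP.
- move/row_free_mk => h; apply/row_free_mk; move: h.
  by rewrite -mk_tr /row_free mxrank_tr => /eqP ->; apply/eqP.
Qed.

Section G.
Variables (V : finType) (a : V -> V -> R).

Definition Kb := ker_triv (fun v (e : edge_t a) => inc a v e).
Definition Ka := ker_triv (fun (e : edge_t a) v => inc a v e).

Lemma nonsing_iff : nonsingular (S_adj a) <-> Ka /\ Kb.
Proof.
rewrite /nonsingular -row_free_unit.
change (row_free (mk (S_adj a)) <-> Ka /\ Kb).
have hh : row_free (mk (S_adj a)) <-> ker_triv (S_adj a) by apply: row_free_mk.
apply: (iff_trans hh); split.
- move=> kt; split.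
  + move=> y hy e.
    pose z (s : (V + edge_t a)%type) := match s with inl _ => 0 | inr e => y e end.
    apply: (kt z _ (inr e)) => -[v|e'].
    * by rewrite big_sumType /= [X in X + _]big1 ?add0r ?hy // => *; rewrite mul0r.
    * by rewrite big_sumType /= !big1 ?addr0 // => *; rewrite ?mul0r ?mulr0.
  + move=> x hx v.
    pose z (s : (V + edge_t a)%type) := match s with inl v => x v | inr e => 0 end.
    apply: (kt z _ (inl v)) => -[v'|e'].
    * by rewrite big_sumType /= !big1 ?addr0 // => *; rewrite ?mul0r ?mulr0.
    * by rewrite big_sumType /= [X in _ + X]big1 ?addr0 ?hx // => *; rewrite mul0r.
- case=> hA hB z hz.
  have zl : forall v, z (inl v) = 0.
    apply: hB => e; have := hz (inr e); rewrite big_sumType /=.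
    by rewrite [X in _ + X]big1 ?addr0 // => *; rewrite mulr0.
  have zr : forall e, z (inr e) = 0.
    apply: hA => v; have := hz (inl v); rewrite big_sumType /=.
    by rewrite [X in X + _]big1 ?add0r // => *; rewrite mulr0.
  by case.
Qed.

Lemma Kb_card : Kb -> (#|V| <= #|{: {e : {set V} | e \in edges a}}|)%N.
Proof. exact: ker_triv_card. Qed.
Lemma Ka_card : Ka -> (#|{: {e : {set V} | e \in edges a}}| <= #|V|)%N.
Proof. exact: ker_triv_card. Qed.
Lemma KaKb_sq : #|V| = #|{: {e : {set V} | e \in edges a}}| -> Kb <-> Ka.
Proof. move=> h; exact: (ker_triv_sq (fun v (e : edge_t a) => inc a v e) h). Qed.

End G.
End LinAlg.
Lemma set2_eq (T : finType) (a b x y : T) :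
  [set a; b] = [set x; y] -> (a = x /\ b = y) \/ (a = y /\ b = x).
Proof.
move=> h.
have ha : a \in [set x; y] by rewrite -h set21.
have hb : b \in [set x; y] by rewrite -h set22.
have hx : x \in [set a; b] by rewrite h set21.
have hy : y \in [set a; b] by rewrite h set22.
move/set2P: ha => [?|?]; move/set2P: hb => [?|?];
  move/set2P: hx => [?|?]; move/set2P: hy => [?|?]; subst; auto.
Qed.

Lemma connect_const (T : finType) (r : rel T) (A : Type) (f : T -> A) :
  (forall a b, r a b -> f a = f b) -> forall a b, connect r a b -> f a = f b.
Proof.
move=> h a b /connectP [p pp ->]; elim: p a pp => [|c p IH] a //= /andP [rac pp].
by rewrite (h _ _ rac) IH.
Qed.

Section Graph.
Variables (R : realFieldType) (T : finType) (w : T -> T -> R).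
Hypothesis w_sym : forall x y, w x y = w y x.

Lemma adj_sym x y : adj w x y = adj w y x.
Proof. by rewrite /adj eq_sym w_sym. Qed.

Lemma edgesP e : reflect (exists x y, adj w x y /\ e = [set x; y]) (e \in edges w).
Proof.
rewrite /edges inE; apply: (iffP existsP) => [[x /existsP [y /andP [h /eqP ->]]]|[x [y [h ->]]]].
  by exists x, y.
by exists x; apply/existsP; exists y; rewrite h eqxx.
Qed.

Lemma edges2 x y : ([set x; y] \in edges w) = adj w x y.
Proof.
apply/edgesP/idP => [[a [b [h /set2_eq [[-> ->]|[-> ->]]]]]|h]; last by exists x, y.
  by []. by rewrite adj_sym.
Qed.

Lemma adj_neq x y : adj w x y -> x != y.
Proof. by case/andP. Qed.

Lemma edge_card e : e \in edges w -> #|e| = 2%N.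
Proof. by case/edgesP => x [y [/adj_neq h ->]]; rewrite cards2 h. Qed.

Lemma edge_irr (H : {set {set T}}) x : H \subset edges w -> ([set x; x] \in H) = false.
Proof.
move=> sH; apply/negP => /(subsetP sH); rewrite edges2 => /adj_neq; by rewrite eqxx.
Qed.

End Graph.
Lemma sum_sub (R : realFieldType) (T : finType) (A : {set T}) (f : T -> R) :
  \sum_(u : {x : T | x \in A}) f (val u) = \sum_(v in A) f v.
Proof. by rewrite (big_sub A f). Qed.
Lemma sum_sub2 (R : realFieldType) (T : finType) (A : {set T}) (f g : T -> R) :
  \sum_(u : {x : T | x \in A}) f (val u) * g (val u) = \sum_(v in A) f v * g v.
Proof. exact: (sum_sub A (fun v => f v * g v)). Qed.
Section FindCycle.
Variables (T : finType) (r : rel T).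
Hypothesis r_irr : forall x, r x x = false.
Hypothesis r_deg : forall a b, r a b -> exists c, r b c /\ c != a.

Definition has_cyc := exists q : seq T, [/\ uniq q, cycle r q & (2 < size q)%N].

Lemma close (p1 p2 p0 : seq T) (c y z : T) :
  sorted r (p1 ++ c :: p2) -> uniq (p1 ++ c :: p2) ->
  p1 ++ c :: p2 = rcons (rcons p0 y) z -> c != y -> c != z -> r z c -> has_cyc.
Proof.
move=> so un E cy cz rzc; exists (c :: p2); split.
- by move: un; rewrite cat_uniq => /and3P [].
- have lz : last c p2 = z.
    by have := congr1 (last c) E; rewrite last_cat /= last_rcons.
  rewrite /cycle rcons_path lz rzc andbT.
  by move: so; rewrite sorted_cat_cons => /andP [].
- case: p2 {so un} E => [|t [|u p2]] E //.
  + move: E; rewrite cats1 => /rcons_inj [_ e]; by move: cz; rewrite e eqxx.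
  + have E2 : p1 ++ [:: c; t] = rcons (rcons p1 c) t by rewrite -!cats1 -catA.
    move: E; rewrite E2 => /rcons_inj [/rcons_inj [_ e] _]; by move: cy; rewrite e eqxx.
Qed.

Lemma step x0 s : path r x0 s -> uniq (x0 :: s) -> s != [::] ->
  has_cyc \/ exists s2, [/\ path r x0 s2, uniq (x0 :: s2), s2 != [::] & size s2 = (size s).+1].
Proof.
case/lastP: s => [|s' z] // pa un _.
move: (pa); rewrite rcons_path => /andP [pa' ryz].
have [c [rzc cy]] := r_deg ryz.
have cz : c != z by apply/eqP => e; move: rzc; rewrite e r_irr.
case hc : (c \in x0 :: rcons s' z).
- left; set p := x0 :: rcons s' z in hc un.
  have E : p = take (index c p) p ++ c :: drop (index c p).+1 p.
    by rewrite -drop_index // cat_take_drop.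
  apply: (@close (take (index c p) p) (drop (index c p).+1 p) (belast x0 s') c (last x0 s') z) => //.
  + by rewrite -E.
  + by rewrite -E.
  + by rewrite -E /p -rcons_cons lastI.
- right; exists (rcons (rcons s' z) c); split => //.
  + by rewrite rcons_path pa last_rcons.
  + by rewrite -rcons_cons rcons_uniq hc un.
  + by case: s' {pa pa' un hc ryz cy}.
  + by rewrite size_rcons.
Qed.

Lemma grow n x0 s : (#|T| - size s <= n)%N -> path r x0 s -> uniq (x0 :: s) -> s != [::] ->
  has_cyc.
Proof.
elim: n s => [|n IH] s hn pa un ne.
- move/card_uniqP: (un) => h2; have h1 := max_card (mem (x0 :: s)).
  rewrite h2 /= in h1; rewrite leqn0 subn_eq0 in hn; by rewrite ltnNge hn in h1.
- case: (step pa un ne) => // [[s2 [pa2 un2 ne2 sz2]]].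
  apply: (IH s2) => //; rewrite sz2; lia.
Qed.

Lemma cyc_exists x0 y0 : r x0 y0 -> has_cyc.
Proof.
move=> rxy; apply: (@grow #|T| x0 [:: y0]) => //.
- by rewrite leq_subr.
- by rewrite /= rxy.
- rewrite /= inE andbT; apply/eqP => e; by move: rxy; rewrite e r_irr.
Qed.

End FindCycle.
Lemma next_next_neq (T : finType) (q : seq T) v :
  uniq q -> (2 < size q)%N -> v \in q -> next q (next q v) != v.
Proof.
move=> un sz hv; case: (rot_to hv) => i s' E.
have un' : uniq (v :: s') by rewrite -E rot_uniq.
have sz' : (2 < size (v :: s'))%N by rewrite -E size_rot.
rewrite -!(next_rot i un) E.
case: s' un' sz' {E} => [|a [|b t]] //= /andP [hv' /andP [ha _]] _.
rewrite eqxx; have av : (a == v) = false.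
  by apply/negbTE; apply: contra hv' => /eqP ->; rewrite inE eqxx.
rewrite av eqxx; apply: contra hv' => /eqP ->; by rewrite !inE eqxx orbT.
Qed.

Section SeqCycle.
Variables (R : realFieldType) (T : finType) (w : T -> T -> R).
Hypothesis w_sym : forall x y, w x y = w y x.
Variable H : {set {set T}}.
Hypothesis sH : H \subset edges w.

Lemma seq_cycle (q : seq T) : uniq q -> cycle (fun a b => [set a; b] \in H) q -> (2 < size q)%N ->
  is_cycle w [set x in q] [set [set x; next q x] | x in q] /\
  [set [set x; next q x] | x in q] \subset H.
Proof.
move=> un cy sz.
set F := [set [set x; next q x] | x in q].
have nx : forall x, x \in q -> [set x; next q x] \in H by move=> x hx; exact: (next_cycle cy hx).
have sFH : F \subset H by apply/subsetP => e /imsetP [x hx ->]; exact: nx.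
split => //; split.
- exact: subset_trans sFH sH.
- move=> e /imsetP [x hx ->]; apply/subsetP => v /set2P [->|->]; by rewrite inE ?mem_next.
- by rewrite cardsE; move/card_uniqP: un => ->.
- move=> v; rewrite inE => hv.
  have vna : v != next q v.
    apply/eqP => e; have := nx v hv; by rewrite -e (edge_irr w_sym v sH).
  have -> : [set e in F | v \in e] = [set [set v; next q v]; [set prev q v; v]].
    apply/setP => e; rewrite !inE; apply/andP/orP.
    + case=> /imsetP [x hx ->] /set2P [->|e2]; first by left.
      right; by rewrite e2 (prev_next un).
    + case=> /eqP ->; split.
      * exact: imset_f.
      * exact: set21.
      * have -> : [set prev q v; v] = [set prev q v; next q (prev q v)] by rewrite (next_prev un).
        by apply: imset_f; rewrite mem_prev.
      * exact: set22.
  rewrite cards2; case: eqP => // /set2_eq [[e1 e2]|[_ e2]].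
  + by move: vna; rewrite e2 eqxx.
  + have := next_next_neq un sz hv; by rewrite e2 (next_prev un) eqxx.
- move=> x y; rewrite !inE => hx hy.
  apply: (connect_cycle _ hx hy).
  apply: (cycle_from_next un) => z hz; exact: imset_f.
Qed.

End SeqCycle.
Lemma find_cycle (R : realFieldType) (T : finType) (w : T -> T -> R)
  (w_sym : forall x y, w x y = w y x) (H : {set {set T}}) :
  H \subset edges w -> (exists a b, [set a; b] \in H) ->
  (forall a b, [set a; b] \in H -> exists c, [set b; c] \in H /\ c != a) ->
  exists C F, is_cycle w C F /\ F \subset H.
Proof.
move=> sH [a [b hab]] hdeg.
have [q [un cy sz]] := @cyc_exists T (fun a b => [set a; b] \in H)
   (fun x => edge_irr w_sym x sH) hdeg a b hab.
have [h1 h2] := seq_cycle w_sym sH un cy sz.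
by exists [set x in q], [set [set x; next q x] | x in q].
Qed.

Section Signed.
Variables (R : realFieldType) (T : finType).

Definition sg (v : T) (e : {set T}) : R :=
  if v \in e then (if [pick u in e] == Some v then 1 else -1) else 0.

Lemma sg_nin v (e : {set T}) : v \notin e -> sg v e = 0.
Proof. by rewrite /sg => /negbTE ->. Qed.

Lemma sg_neq0 v (e : {set T}) : v \in e -> sg v e != 0.
Proof. rewrite /sg => ->; case: ifP => _; by rewrite ?oppr_eq0 oner_eq0. Qed.

Lemma sg_sum (c : T -> R) x y : x != y ->
  (\sum_v c v * sg v [set x; y] = c x - c y) \/
  (\sum_v c v * sg v [set x; y] = c y - c x).
Proof.
move=> xy.
have E : \sum_v c v * sg v [set x; y] = c x * sg x [set x; y] + c y * sg y [set x; y].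
  rewrite (bigD1 x) // (bigD1 y) /=; last by rewrite eq_sym.
  rewrite big1 ?addr0 ?addrA // => v /andP [vy vx].
  by rewrite sg_nin ?mulr0 // !inE negb_or vx vy.
rewrite E /sg !set21 !set22.
case: pickP => [p|]; last by move/(_ x); rewrite set21.
move/set2P => [->|->].
- left; rewrite eqxx; have -> : (Some x == Some y) = false by apply/negbTE; rewrite /eq_op /= xy.
  by rewrite mulr1 mulrN1.
- right; rewrite eqxx; have -> : (Some y == Some x) = false by apply/negbTE; rewrite /eq_op /= eq_sym xy.
  by rewrite mulr1 mulrN1 addrC.
Qed.

Variable E' : {set {set T}}.
Hypothesis hE : forall e, e \in E' -> exists x y, x != y /\ e = [set x; y].

Definition J := {e : {set T} | e \in E'}.

Lemma card_J : #|{: J}| = #|E'|.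
Proof. by rewrite card_sig; apply: eq_card => e; rewrite !inE. Qed.

Lemma pair_neq a b : [set a; b] \in E' -> a != b.
Proof.
move/hE => [x [y [xy /set2_eq [[e1 e2]|[e1 e2]]]]]; subst; first by [].
by rewrite eq_sym.
Qed.

Lemma sg_ker_const (x : T -> R) : (forall e : J, \sum_v x v * sg v (val e) = 0) ->
  forall a b, [set a; b] \in E' -> x a = x b.
Proof.
move=> h a b hab; have := h (exist (fun e => e \in E') _ hab); rewrite /=.
case: (sg_sum x (pair_neq hab)) => -> /eqP; rewrite subr_eq0 => /eqP //.
Qed.

Lemma conn_count : (forall x y, connect (fun a b => [set a; b] \in E') x y) ->
  (#|T| <= #|E'| + 1)%N.
Proof.
move=> hc.
case: (pickP (fun _ : T => true)) => [v0 _|h0]; last first.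
  by rewrite (eq_card0 h0).
pose D := mk (fun v (e : J) => sg v (val e) : R).
have sK : (kermx D <= (const_mx 1 : 'rV[R]_#|T|))%MS.
  apply/row_subP => i; set u := row i (kermx D).
  have uD : u *m D = 0 by rewrite /u -row_mul mulmx_ker row0.
  pose x v := u 0 (enum_rank v).
  have hx : forall e : J, \sum_v x v * sg v (val e) = 0.
    move=> e; move/matrixP: uD => /(_ 0 (enum_rank e)); rewrite !mxE => uD.
    rewrite -[RHS]uD -(sum_enum (fun v => x v * sg v (val e))) /=.
    by apply: eq_bigr => k _; rewrite /x enum_valK !mxE enum_rankK.
  have xc : forall v, x v = x v0.
    move=> v; apply: (connect_const (r := fun a b => [set a; b] \in E')) => //.
      exact: sg_ker_const.
  have -> : u = x v0 *: (const_mx 1 : 'rV[R]_#|T|).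
    apply/rowP => k; rewrite [RHS]mxE [X in _ * X]mxE mulr1 -(xc (enum_val k)) /x enum_valK.
    by [] || (congr (u _ _); exact: ord1).
  by apply: scalemx_sub; exact: submx_refl.
have h1 := mxrankS sK.
rewrite mxrank_ker in h1.
have h2 := leq_trans h1 (rank_leq_row _); clear h1.
have h3 : (\rank D <= #|E'|)%N by rewrite -card_J; exact: rank_leq_col.
lia.
Qed.

Lemma acyc_count : (0 < #|T|)%N -> ker_triv (fun (e : J) v => sg v (val e) : R) ->
  (#|E'| < #|T|)%N.
Proof.
move=> T0 kt.
pose D := mk (fun (e : J) v => sg v (val e) : R).
have rf : row_free D by apply/row_free_mk.
have D1 : D *m (const_mx 1 : 'M[R]_(#|T|, 1)) = 0.
  apply/matrixP => i j; rewrite !mxE.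
  have := valP (enum_val i) => /hE [x [y [xy E]]].
  transitivity (\sum_v (fun _ => 1) v * sg v [set x; y]).
    rewrite -(sum_enum (fun v => (fun _ => 1 : R) v * sg v [set x; y])) /=.
    by apply: eq_bigr => k _; rewrite !mxE mulr1 mul1r E.
  by case: (sg_sum (fun _ => 1 : R) xy) => ->; rewrite subrr.
have := mulmx0_rank_max D1.
move/eqP: rf => ->; rewrite card_J.
have : \rank (const_mx 1 : 'M[R]_(#|T|, 1)) != 0%N.
  rewrite mxrank_eq0; apply/eqP => /matrixP /(_ (Ordinal T0) 0); rewrite !mxE.
  by move/eqP; rewrite oner_eq0.
lia.
Qed.

End Signed.
Section Flow.
Variables (R : realFieldType) (T : finType) (w : T -> T -> R).
Hypothesis w_sym : forall x y, w x y = w y x.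

Lemma edges_hE (E' : {set {set T}}) : E' \subset edges w ->
  forall e, e \in E' -> exists x y, x != y /\ e = [set x; y].
Proof.
move=> sE e /(subsetP sE) /edgesP [x [y [h ->]]]; exists x, y; split => //.
exact: adj_neq h.
Qed.

Lemma acyc_flow (E' : {set {set T}}) : E' \subset edges w ->
  (forall C F, is_cycle w C F -> ~~ (F \subset E')) ->
  ker_triv (fun (e : J E') v => sg R v (val e)).
Proof.
move=> sE nocyc y hy e0; apply/eqP/negPn/negP => ne.
have hE := edges_hE sE.
pose H := [set val e | e in [set e : J E' | y e != 0]].
have sHE : H \subset E' by apply/subsetP => f /imsetP [e _ ->]; exact: valP.
have sH : H \subset edges w := subset_trans sHE sE.
have [C [F [cyc sF]]] : exists C F, is_cycle w C F /\ F \subset H.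
  apply: (find_cycle w_sym sH).
  - have [x [z [_ E]]] := hE _ (valP e0); exists x, z; rewrite -E.
    by apply: imset_f; rewrite inE.
  - move=> a b hab.
    case: (boolP [exists c, ([set b; c] \in H) && (c != a)]) => [/existsP [c /andP [h1 h2]]|hn].
      by exists c.
    exfalso.
    have hn' : forall c, [set b; c] \in H -> c = a.
      move=> c hc; apply/eqP; apply/negPn/negP => ca; move/negP: hn; apply.
      by apply/existsP; exists c; rewrite hc ca.
    case/imsetP: hab => e1; rewrite inE => ye1 E1.
    have := hy b; rewrite (bigD1 e1) //= big1 ?addr0.
      apply/eqP; rewrite mulf_eq0 negb_or ye1 sg_neq0 // -E1; exact: set22.
    move=> e ne1; case: (y e =P 0) => [->|/eqP ye]; first by rewrite mul0r.
    case: (boolP (b \in val e)) => hb; last by rewrite sg_nin ?mulr0.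
    exfalso; move/eqP: ne1; apply.
    have [p [q [pq Ee]]] := hE _ (valP e).
    have heH : val e \in H by apply: imset_f; rewrite inE.
    apply: val_inj; rewrite -E1.
    move: hb; rewrite Ee => /set2P [bp|bq].
    + subst p; move: heH; rewrite Ee => /hn' qa; by rewrite qa setUC.
    + subst q; move: heH; rewrite Ee setUC => /hn' pa; by rewrite pa setUC.
have := nocyc C F cyc; rewrite (subset_trans sF sHE); done.
Qed.

End Flow.
Lemma double_count (T : finType) (F : {set {set T}}) (A : {set T}) :
  \sum_(v in A) #|[set e in F | v \in e]| = \sum_(e in F) #|e :&: A|.
Proof.
have h1 : forall v, #|[set e in F | v \in e]| = \sum_(e in F) (v \in e : nat).
  move=> v; rewrite -sum1_card (eq_bigl (fun e => (e \in F) && (v \in e))); last first.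
    by move=> e; rewrite !inE.
  by rewrite big_mkcondr; apply: eq_bigr => e _; case: (v \in e).
have h2 : forall e : {set T}, #|e :&: A| = \sum_(v in A) (v \in e : nat).
  move=> e; rewrite -sum1_card (eq_bigl (fun v => (v \in A) && (v \in e))); last first.
    by move=> v; rewrite !inE andbC.
  by rewrite big_mkcondr; apply: eq_bigr => v _; case: (v \in e).
rewrite (eq_bigr _ (fun v _ => h1 v)) (eq_bigr _ (fun e _ => h2 e)).
exact: exchange_big.
Qed.

Lemma even_sum (I : finType) (P : pred I) (f : I -> nat) :
  (forall i, P i -> ~~ odd (f i)) -> ~~ odd (\sum_(i | P i) f i).
Proof.
move=> h; apply: (big_ind (fun n => ~~ odd n)) => //.
by move=> x y hx hy; rewrite oddD (negbTE hx) (negbTE hy).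
Qed.

Section Cycles.
Variables (R : realFieldType) (T : finType) (w : T -> T -> R).
Hypothesis w_sym : forall x y, w x y = w y x.
Variables (C : {set T}) (F : {set {set T}}).
Hypothesis cyc : is_cycle w C F.

Lemma cycle_card : #|F| = #|C|.
Proof.
case: cyc => sF sC _ deg _.
have := double_count F C.
rewrite (eq_bigr (fun _ => 2%N)) => [|v hv]; last by rewrite deg.
rewrite [in RHS](eq_bigr (fun _ => 2%N)) => [|e he]; last first.
  by rewrite (setIidPl (sC e he)) (edge_card (subsetP sF e he)).
rewrite !sum_nat_const => /eqP; rewrite eqn_mul2r /= => /eqP //.
Qed.

Lemma cycle_C : C = [set v | [exists e in F, v \in e]].
Proof.
case: cyc => sF sC _ deg _.
apply/setP => v; rewrite inE; apply/idP/existsP => [hv|[e /andP [he hve]]].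
  have : (0 < #|[set e in F | v \in e]|)%N by rewrite deg.
  case/card_gt0P => e; rewrite inE => he; by exists e.
exact: (subsetP (sC e he)).
Qed.

Lemma cycle_edge_conn a b : [set a; b] \in F ->
  connect (fun x y => [set x; y] \in F :\ [set a; b]) a b.
Proof.
move=> hab; case: (cyc) => sF sC _ deg _.
set e := [set a; b] in hab *.
set F' := F :\ e.
set r' := fun x y => [set x; y] \in F'.
have ab : a != b by have := subsetP sF e hab; rewrite /e (edges2 w_sym); exact: adj_neq.
have aC : a \in C by apply: (subsetP (sC e hab)); rewrite set21.
have deg' : forall v, v \in C -> (#|[set f in F' | v \in f]| + (v \in e) = 2)%N.
  move=> v hv; rewrite -(deg v hv) (cardsD1 e [set f in F | v \in f]).
  have -> : (e \in [set f in F | v \in f]) = (v \in e) by rewrite inE hab.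
  rewrite addnC; congr (_ + _)%N.
  by apply: eq_card => f; rewrite !inE andbA.
case: (boolP (connect r' a b)) => // nab; exfalso.
set K := [set v | connect r' a v].
have KC : forall v, v \in K -> v \in C.
  move=> v; rewrite inE => hv.
  have : (a \in C) = (v \in C).
    apply: (connect_const (r := r') (f := fun u => u \in C)) hv => x y /=; rewrite /r' /F' inE => /andP [_ hxy].
    have /subsetP s := sC _ hxy; by rewrite (s x (set21 _ _)) (s y (set22 _ _)).
  by rewrite aC.
have := double_count F' K.
have odd_l : odd (\sum_(v in K) #|[set f in F' | v \in f]|).
  have aK : a \in K by rewrite inE connect0.
  rewrite (bigD1 a aK) /= oddD.
  have -> : #|[set f in F' | a \in f]| = 1%N.
    by have := deg' a aC; rewrite /e set21 addn1 => -[].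
  rewrite /= even_sum // => v /andP [vK va].
  have := deg' v (KC v vK); rewrite /e !inE (negbTE va).
  have -> : (v == b) = false.
    apply/negbTE; apply: contraNneq nab => vb; have : v \in K := vK; by rewrite inE vb.
  by rewrite addn0 => ->.
have even_r : ~~ odd (\sum_(f in F') #|f :&: K|).
  apply: even_sum => f hf.
  have [x [y [xy Ef]]] := edges_hE (subset_trans (subD1set F e) sF) hf.
  have rxy : r' x y by rewrite /r' -Ef.
  have ryx : r' y x by rewrite /r' setUC -Ef.
  case: (boolP (x \in K)) => hx.
    have hy : y \in K by move: hx; rewrite !inE => hx; exact: connect_trans hx (connect1 rxy).
    rewrite (setIidPl _) ?Ef ?cards2 ?xy //.
    by apply/subsetP => z /set2P [->|->].
  have hy : y \notin K.
    apply: contra hx; rewrite !inE => hy; exact: connect_trans hy (connect1 ryx).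
  have -> : f :&: K = set0.
    apply/setP => z; rewrite !inE Ef; apply/negP => /andP [/set2P [->|->]].
    - by move=> h; move: hx; rewrite inE h.
    - by move=> h; move: hy; rewrite inE h.
  by rewrite cards0.
by move=> E; move: odd_l; rewrite E (negbTE even_r).
Qed.

End Cycles.

Lemma conn_minus (R : realFieldType) (T : finType) (w : T -> T -> R)
  (w_sym : forall x y, w x y = w y x) (E : {set {set T}}) C F e :
  is_cycle w C F -> F \subset E -> e \in F ->
  (forall x y, connect (fun a b => [set a; b] \in E) x y) ->
  forall x y, connect (fun a b => [set a; b] \in E :\ e) x y.
Proof.
move=> cyc sFE heF hc.
have symr : connect_sym (fun a b => [set a; b] \in E :\ e).
  by apply: sym_connect_sym => a b; rewrite setUC.
have [a [b [ab Ee]]] := edges_hE (let: And5 sF _ _ _ _ := cyc in sF) heF.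
have cab : connect (fun a b => [set a; b] \in E :\ e) a b.
  have := cycle_edge_conn w_sym cyc (a := a) (b := b); rewrite -Ee => /(_ heF).
  apply: connect_sub => x y; rewrite !inE => /andP [h1 h2]; apply: connect1.
  by rewrite !inE h1 (subsetP sFE _ h2).
move=> x y; apply: (connect_sub _ (hc x y)) => u v huv.
case: (boolP ([set u; v] == e)) => he.
  move/eqP: he => he; case: (set2_eq (etrans he Ee)) => [[-> ->]|[-> ->]] //.
  by rewrite symr.
by apply: connect1; rewrite !inE he huv.
Qed.
Lemma inc_pair (R : realFieldType) (V : finType) (a : V -> V -> R) (e : edge_t a) p q :
  val e = [set p; q] -> p != q -> forall v,
  inc a v e = if v == p then a p q else if v == q then a q p else 0.
Proof.
move=> E pq v; rewrite /inc E !inE.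
case: (v =P p) => [->|/eqP vp] /=.
  by rewrite setU1K ?big_set1 // inE.
case: (v =P q) => [->|/eqP vq] //=.
rewrite setUC setU1K ?big_set1 // inE eq_sym //.
Qed.

Section Transfer.
Variables (R : realFieldType) (T : finType) (w : T -> T -> R).
Hypothesis w_sym : forall x y, w x y = w y x.
Variables (C : {set T}) (F : {set {set T}}).
Hypothesis cyc : is_cycle w C F.

Let U := {x : T | x \in C}.
Let wc := cyc_weight w C F.

Lemma sF : F \subset edges w.
Proof. by case: cyc. Qed.

Lemma wc_sym (x y : U) : wc x y = wc y x.
Proof. by rewrite /wc /cyc_weight setUC w_sym. Qed.

Lemma adjc (x y : U) : adj wc x y = ([set val x; val y] \in F).
Proof.
rewrite /adj /wc /cyc_weight.
case: (boolP ([set val x; val y] \in F)) => h; last by rewrite eqxx andbF.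
have := subsetP sF _ h; rewrite (edges2 w_sym) => /andP [h1 h2].
rewrite h2 andbT; apply: contra h1 => /eqP ->; done.
Qed.

Lemma img_edges (e' : edge_t wc) : val @: (val e') \in F.
Proof.
case/edgesP: (valP e') => p [q [h ->]].
by rewrite imsetU1 imset_set1 -adjc.
Qed.

Definition imgE (e' : edge_t wc) : edge_t w :=
  exist (fun e => e \in edges w) (val @: (val e')) (subsetP sF _ (img_edges e')).

Lemma imgE_inj : injective imgE.
Proof.
move=> e1 e2 /(congr1 val) /= /(imset_inj val_inj) h; exact: val_inj.
Qed.

Lemma inc_img (x : U) (e' : edge_t wc) : inc wc x e' = inc w (val x) (imgE e').
Proof.
case/edgesP: (valP e') => p [q [h E]].
have pq : p != q := adj_neq h.
have vpq : val p != val q by apply: contra pq => /eqP /val_inj ->.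
rewrite (inc_pair E pq) (@inc_pair _ _ w (imgE e') (val p) (val q)); last first.
- exact: vpq.
- by rewrite /= E imsetU1 imset_set1.
have hF : [set val p; val q] \in F by rewrite -adjc.
rewrite /wc /cyc_weight hF setUC hF.
rewrite (inj_eq val_inj) (inj_eq val_inj) //.
Qed.

Lemma inc_out (v : T) (e' : edge_t wc) : v \notin C -> inc w v (imgE e') = 0.
Proof.
move=> hv; rewrite /inc ifF //; apply/negbTE; apply: contra hv => /imsetP [u _ ->].
exact: valP.
Qed.

Lemma Ka_transfer : Ka w -> Ka wc.
Proof.
move=> hK y hy.
pose y' (e : edge_t w) := \sum_(e' | imgE e' == e) y e'.
have H : forall v, \sum_e y' e * inc w v e = 0.
  move=> v.
  have -> : \sum_e y' e * inc w v e = \sum_e' y e' * inc w v (imgE e').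
    rewrite /y'; under eq_bigr do rewrite big_distrl /=.
    rewrite (exchange_big_dep predT) //=; apply: eq_bigr => e' _.
    rewrite (big_pred1 (imgE e')) // => e; exact: eq_sym.
  case: (boolP (v \in C)) => hv.
  - rewrite -[RHS](hy (exist _ v hv)); apply: eq_bigr => e' _.
    by rewrite inc_img.
  - by rewrite big1 // => e' _; rewrite inc_out ?mulr0.
move=> e'; have := hK y' H (imgE e'); rewrite /y' (big_pred1 e') //.
move=> e''; rewrite /= (inj_eq imgE_inj); done.
Qed.

Lemma Kb_transfer : Kb wc -> forall x : T -> R,
  (forall e : edge_t w, \sum_v x v * inc w v e = 0) -> forall v, v \in C -> x v = 0.
Proof.
move=> hK x hx v hv.
have := hK (fun u : U => x (val u)) _ (exist _ v hv); apply => e'.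
rewrite -[RHS](hx (imgE e')).
under eq_bigr do rewrite inc_img.
rewrite (sum_sub2 C x (fun u => inc w u (imgE e'))).
rewrite [RHS](bigID (fun u => u \in C)) /= [X in _ = _ + X]big1 ?addr0 //.
by move=> u hu; rewrite inc_out ?mulr0.
Qed.

Lemma card_wc : #|{: {e : {set U} | e \in edges wc}}| = #|{: U}|.
Proof.
have -> : #|{: U}| = #|C| by rewrite card_sig; apply: eq_card => z; rewrite !inE.
rewrite -(cycle_card cyc).
have inj : injective (fun e' : edge_t wc => val @: val e').
  by move=> e1 e2 h; apply: imgE_inj; apply: val_inj.
rewrite -cardsT -(card_imset _ inj); apply: eq_card => f.
apply/imsetP/idP => [[e' _ ->]|hf]; first exact: img_edges.
case: cyc => _ sC _ _ _.
have /edgesP [p [q [h Ef]]] := subsetP sF _ hf.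
have hp : p \in C by apply: (subsetP (sC _ hf)); rewrite Ef set21.
have hq : q \in C by apply: (subsetP (sC _ hf)); rewrite Ef set22.
pose p' : U := exist _ p hp.
pose q' : U := exist _ q hq.
have H0 : [set p'; q'] \in edges wc by rewrite (edges2 wc_sym) adjc /= -Ef.
exists (exist (fun e => e \in edges wc) _ H0) => //=.
by rewrite imsetU1 imset_set1 Ef.
Qed.

End Transfer.
Lemma sum_pair (R : realFieldType) (V : finType) (c : V -> R) a b (g1 g2 : R) : a != b ->
  \sum_v c v * (if v == a then g1 else if v == b then g2 else 0) = c a * g1 + c b * g2.
Proof.
move=> ab; rewrite (bigD1 a) // (bigD1 b) /=; last by rewrite eq_sym.
have ba : (b == a) = false by apply/negbTE; rewrite eq_sym.
rewrite eqxx ba eqxx.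
by rewrite big1 ?addr0 ?addrA // => v /andP [vb va]; rewrite (negbTE va) (negbTE vb) mulr0.
Qed.

Section Main.
Variables (R : realFieldType) (T : finType) (w : T -> T -> R).
Hypothesis w_sym : forall x y, w x y = w y x.
Hypothesis T_ne : (0 < #|T|)%N.
Hypothesis X_conn : connectedw w.

Lemma conn_E : forall x y, connect (fun a b => [set a; b] \in edges w) x y.
Proof.
move=> x y; rewrite (eq_connect (e' := adj w)) ?X_conn // => a b.
exact: edges2.
Qed.

Lemma card_Ew : #|{: edge_t w}| = #|edges w|.
Proof. exact: card_J. Qed.

Lemma Kb_zero (x : T -> R) : (forall e : edge_t w, \sum_v x v * inc w v e = 0) ->
  forall v0, x v0 = 0 -> forall v, x v = 0.
Proof.
move=> hx v0 h0 v; apply/eqP.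
rewrite -(@connect_const _ (adj w) _ (fun u => x u == 0) _ v0 v (X_conn v0 v)) ?h0 //.
move=> a b hab.
have he : [set a; b] \in edges w by rewrite (edges2 w_sym).
have := hx (exist (fun e => e \in edges w) _ he).
rewrite (eq_bigr (fun u => x u * (if u == a then w a b else if u == b then w b a else 0))); last first.
  by move=> u _; rewrite (@inc_pair _ _ w (exist (fun e => e \in edges w) _ he) a b) //; exact: adj_neq hab.
rewrite sum_pair; last exact: adj_neq hab.
rewrite (w_sym b a) -mulrDl => /eqP; rewrite mulf_eq0.
case/andP: hab => _ /negbTE ->; rewrite orbF addr_eq0 => /eqP ->.
by rewrite oppr_eq0.
Qed.

Lemma cycle_edge C F : is_cycle w C F -> exists e, e \in F.
Proof.
case=> _ _ c3 deg _.
have : (0 < #|C|)%N by apply: leq_trans c3.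
case/card_gt0P => v hv.
have : (0 < #|[set e in F | v \in e]|)%N by rewrite deg.
case/card_gt0P => e; rewrite inE => /andP [he _]; by exists e.
Qed.

Lemma two_cycles C1 F1 C2 F2 e : is_cycle w C1 F1 -> is_cycle w C2 F2 ->
  e \in F1 -> e \notin F2 -> (#|T| < #|edges w|)%N.
Proof.
move=> c1 c2 he1 he2.
have sF1 : F1 \subset edges w by case: c1.
have sF2 : F2 \subset edges w by case: c2.
set E1 := edges w :\ e.
have conn1 := conn_minus w_sym c1 sF1 he1 conn_E.
have sF2E1 : F2 \subset E1.
  apply/subsetP => f hf; rewrite /E1 in_setD1 (subsetP sF2 _ hf) andbT.
  by apply: contra he2 => /eqP <-.
have [e2 he2'] := cycle_edge c2.
set E2 := E1 :\ e2.
have conn2 := conn_minus w_sym c2 sF2E1 he2' conn1.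
have sE2 : E2 \subset edges w.
  by apply: subset_trans (subD1set _ _) _; apply: subD1set.
have := conn_count R (edges_hE sE2) conn2.
have h1 := cardsD1 e (edges w).
have h2 := cardsD1 e2 E1.
rewrite (subsetP sF1 _ he1) in h1.
rewrite (subsetP sF2E1 _ he2') in h2.
rewrite -/E1 in h1. rewrite -/E2 in h2.
lia.
Qed.

Lemma cycle_eq C F C' F' : is_cycle w C F -> is_cycle w C' F' -> F = F' -> C = C'.
Proof.
move=> c1 c2 eF; rewrite (cycle_C c1) (cycle_C c2) eF //.
Qed.

End Main.
Unset Implicit Arguments.

Theorem theorem34 (R : realFieldType) (T : finType) (w : T -> T -> R)
  (w_sym : forall x y, w x y = w y x) (w_diag : forall x, w x x = 0)
  (T_ne : (0 < #|T|)%N) (X_conn : connectedw w) :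
  nonsingular (S_adj w) <->
  exists (C : {set T}) (F : {set {set T}}),
    [/\ is_cycle w C F,
        (forall C' F', is_cycle w C' F' -> C' = C /\ F' = F) &
        nonsingular (S_adj (cyc_weight w C F))].
Proof.
have hEw := edges_hE (subxx (edges w)).
split.
- move/nonsing_iff => [hA hB].
  have c1 := Kb_card hB.
  have c2 := Ka_card hA.
  rewrite card_Ew in c1 c2.
  have [C [F cyc]] : exists C F, is_cycle w C F.
    case: (classic (exists C F, is_cycle w C F)) => // hn.
    have kt : ker_triv (fun (e : J (edges w)) v => sg R v (val e)).
      apply: (acyc_flow w_sym (subxx _)) => C F c; exfalso; apply: hn; by exists C, F.
    have := acyc_count hEw T_ne kt; lia.
  have hu : forall C' F', is_cycle w C' F' -> C' = C /\ F' = F.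
    move=> C' F' c'.
    have eF : F' = F.
      apply/eqP; rewrite eqEsubset; apply/andP; split.
      + apply/subsetP => e he; apply/negPn/negP => hne.
        have := two_cycles w_sym T_ne X_conn c' cyc he hne; lia.
      + apply/subsetP => e he; apply/negPn/negP => hne.
        have := two_cycles w_sym T_ne X_conn cyc c' he hne; lia.
    split => //; exact: cycle_eq c' cyc eF.
  exists C, F; split => //.
  apply/nonsing_iff.
  have kA := Ka_transfer w_sym cyc hA.
  split => //.
  exact: (proj2 (KaKb_sq (esym (card_wc w_sym cyc)))).
- case=> C [F [cyc hu hns]].
  move/nonsing_iff: hns => [hAc hBc].
  have hB : Kb w.
    move=> x hx v.
    have [v0 hv0] : exists v0, v0 \in C.
      case: cyc => _ _ c3 _ _; have : (0 < #|C|)%N by apply: leq_trans c3.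
      by case/card_gt0P => v0 hv0; exists v0.
    apply: (Kb_zero w_sym X_conn hx (v0 := v0)).
    exact: (Kb_transfer w_sym cyc hBc hx hv0).
  have c1 := Kb_card hB.
  rewrite card_Ew in c1.
  have [e he] := cycle_edge cyc.
  have sF : F \subset edges w by case: cyc.
  have kt : ker_triv (fun (e' : J (edges w :\ e)) v => sg R v (val e')).
    apply: (acyc_flow w_sym (subD1set _ _)) => C' F' c'.
    have [_ ->] := hu C' F' c'.
    by apply/negP => /subsetP /(_ e he); rewrite !inE eqxx.
  have := acyc_count (edges_hE (subD1set _ _)) T_ne kt.
  have h1 := cardsD1 e (edges w); rewrite (subsetP sF e he) in h1.
  move=> h2.
  have nm : #|T| = #|edges w| by lia.
  apply/nonsing_iff; split => //.
  apply: (proj1 (KaKb_sq _)) => //.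
  by rewrite card_Ew.
Qed.
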